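(* Let $H\subseteq\mathbb N$ be a numerical semigroup and $R=k[[H]]=k[[t^h\mid h\in H]]\subseteq k[[t]]$ the numerical semigroup ring over a field $k$. Write $H=\{a_0=0<a_1<a_2<\cdots\}$ and let $n$ be the smallest integer with $a_{n+i}=a_n+i$ for all $i\ge 0$; assume $n\ge 3$. With $I_i$, $\mathcal T(R)$, $\mathcal I(R)$ as in the context, the following are equivalent: (1) $\mathcal T(R)=\mathcal I(R)$; (2) $I_iI_{i+2}=t^{a_i}I_{i+2}$ for all $i\in\{1,\dots,n-2\}$; (3) $a_j+a_{i+1}-a_i\in H$ for all $i\in\{1,\dots,n-2\}$ and $j\in\{i+2,\dots,n\}$. If $k$ is infinite, these are also equivalent to: (4) $\mathcal T(R)$ is a finite set.
   Context: $v$ denotes the $t$-adic order valuation on $k((t))$ (so $v(R\setminus\{0\})=H$). For $0\le i\le n$, $I_i=\{r\in R\mid v(r)\ge a_i\}$ and $\mathcal I(R)=\{I_0,\dots,I_n\}$. The trace ideal of an $R$-module $M$ is $\mathrm{tr}_R(M)=\sum_{f\in\mathrm{Hom}_R(M,R)}\mathrm{Im} f$; an ideal is a trace ideal if it is $\mathrm{tr}_R(M)$ for some $M$. $\mathcal T(R)$ is the set of nonzero trace ideals of $R$. *)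

(* Defs.v *)
From mathcomp Require Import all_boot all_order all_algebra.
Set Implicit Arguments. Unset Strict Implicit. Unset Printing Implicit Defensive.
Import GRing.Theory.
Local Open Scope ring_scope.

(* Formal power series k[[t]]: f m is the coefficient of t^m. *)
Definition series (k : fieldType) := nat -> k.

Section Series.
Variable k : fieldType.

Definition szero : series k := fun _ => 0.
Definition sone : series k := fun m => (m == 0)%N%:R.
Definition sadd (f g : series k) : series k := fun m => f m + g m.
Definition smul (f g : series k) : series k :=
  fun m => \sum_(i < m.+1) f i * g (m - i)%N.
Definition tpow (a : nat) : series k := fun m => (m == a)%:R.

Definition snonzero (f : series k) : Prop := exists m, f m != 0.

Definition ssum (n : nat) (F : 'I_n -> series k) : series k :=
  \big[sadd/szero]_(i < n) F i.

Definition sset := series k -> Prop.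
Definition sset_eq (A B : sset) : Prop := forall f, A f <-> B f.

Definition ideal_nonzero (I : sset) : Prop := exists f, I f /\ snonzero f.

Definition ideal_mul (I J : sset) : sset := fun z =>
  exists (n : nat) (x y : 'I_n -> series k),
    (forall i, I (x i) /\ J (y i)) /\ z = ssum (fun i => smul (x i) (y i)).

Definition sscale (c : series k) (I : sset) : sset := fun z =>
  exists x, I x /\ z = smul c x.

Variable H : pred nat.

(* R = k[[H]] : series supported in H *)
Definition inR (f : series k) : Prop := forall m, f m != 0 -> m \in H.

Definition val_ideal (b : nat) : sset := fun f =>
  inR f /\ (forall m, (m < b)%N -> f m = 0).

Record Rmodule := {
  mcar : Type;
  m0 : mcar;
  madd : mcar -> mcar -> mcar;
  mopp : mcar -> mcar;
  mact : series k -> mcar -> mcar;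
  maddA : forall x y z, madd x (madd y z) = madd (madd x y) z;
  maddC : forall x y, madd x y = madd y x;
  madd0 : forall x, madd m0 x = x;
  maddN : forall x, madd (mopp x) x = m0;
  mactDm : forall r x y, inR r -> mact r (madd x y) = madd (mact r x) (mact r y);
  mactDr : forall r s x, inR r -> inR s ->
      mact (sadd r s) x = madd (mact r x) (mact s x);
  mactM : forall r s x, inR r -> inR s -> mact (smul r s) x = mact r (mact s x);
  mact1 : forall x, mact sone x = x
}.

Definition is_hom (M : Rmodule) (f : mcar M -> series k) : Prop :=
  (forall x, inR (f x)) /\
  (forall x y, f (madd x y) = sadd (f x) (f y)) /\
  (forall r x, inR r -> f (mact r x) = smul r (f x)).

Definition trace (M : Rmodule) : sset := fun z =>
  exists (n : nat) (fs : 'I_n -> (mcar M -> series k)) (xs : 'I_n -> mcar M),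
    (forall i, is_hom (fs i)) /\ z = ssum (fun i => fs i (xs i)).

Definition is_trace_ideal (I : sset) : Prop :=
  exists M : Rmodule, sset_eq I (trace M).

End Series.

Definition numerical_semigroup (H : pred nat) : Prop :=
  (0 \in H) /\ (forall x y, x \in H -> y \in H -> (x + y)%N \in H) /\
  (exists N, forall m, (N <= m)%N -> m \in H).

(* Main.v *)
Require Import Defs.
From mathcomp Require Import all_boot all_order all_algebra.
From Stdlib Require Import FunctionalExtensionality ProofIrrelevance Classical Lia IndefiniteDescription.
From mathcomp Require Import zify ring.
Set Implicit Arguments. Unset Strict Implicit. Unset Printing Implicit Defensive.
Import GRing.Theory.
Local Open Scope ring_scope.

Section Basic.
Variable k : fieldType.
Implicit Types f g h q x y z : series k.

Lemma sext f g : (forall m, f m = g m) -> f = g.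
Proof. by move=> e; apply: functional_extensionality. Qed.

Lemma ssumE n (F : 'I_n -> series k) m : ssum F m = \sum_(i < n) F i m.
Proof.
elim: n F => [|n IH] F; first by rewrite /ssum !big_ord0.
rewrite /ssum big_ord_recl [in RHS]big_ord_recl /=.
by rewrite /sadd -(IH (fun i => F (lift ord0 i))).
Qed.

Definition P_ m f : {poly k} := \poly_(i < m.+1) f i.

Lemma smul_poly f g m i : (i <= m)%N -> smul f g i = (P_ m f * P_ m g)`_i.
Proof.
move=> im; rewrite coefM /smul; apply: eq_bigr => j _.
have jm : (j < m.+1)%N by rewrite ltnS (leq_trans _ im) // -ltnS.
have ijm : (i - j < m.+1)%N by rewrite ltnS (leq_trans (leq_subr _ _)).
by rewrite !coef_poly jm ijm.
Qed.

Lemma smulC f g : smul f g = smul g f.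
Proof. by apply: sext => m; rewrite !(@smul_poly _ _ m) // mulrC. Qed.

Lemma smulA f g h : smul f (smul g h) = smul (smul f g) h.
Proof.
apply: sext => m.
have L : smul (smul f g) h m = (P_ m f * P_ m g * P_ m h)`_m.
  rewrite coefM /smul; apply: eq_bigr => j _.
  rewrite -(@smul_poly f g m j); last by rewrite -ltnS.
  rewrite coef_poly ltnS leq_subr; done.
have R : smul f (smul g h) m = (P_ m f * (P_ m g * P_ m h))`_m.
  rewrite coefM /smul; apply: eq_bigr => j _.
  rewrite -(@smul_poly g h m (m - j)) ?leq_subr // coef_poly.
  by rewrite (ltn_ord j).
by rewrite L R mulrA.
Qed.

Lemma smulDl f g h : smul (sadd f g) h = sadd (smul f h) (smul g h).
Proof. by apply: sext => m; rewrite /smul /sadd -big_split; apply: eq_bigr => i _; rewrite mulrDl. Qed.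

Lemma smulDr f g h : smul h (sadd f g) = sadd (smul h f) (smul h g).
Proof. by rewrite smulC smulDl !(smulC h). Qed.

Lemma smul1 f : smul (sone k) f = f.
Proof.
apply: sext => m; rewrite /smul big_ord_recl /= /sone eqxx mul1r subn0 big1 ?addr0 //.
by move=> i _; rewrite /= mul0r.
Qed.

Lemma smul_nz f g m : smul f g m != 0 ->
  exists i, [/\ (i <= m)%N, f i != 0 & g (m - i)%N != 0].
Proof.
move=> H; apply: NNPP => N; move: H; rewrite /smul big1 ?eqxx // => i _.
have [fi|fi] := eqVneq (f i) 0; first by rewrite fi mul0r.
have [gi|gi] := eqVneq (g (m - i)%N) 0; first by rewrite gi mulr0.
by exfalso; apply: N; exists i; split => //; rewrite -ltnS.
Qed.

Lemma smul_tpow a f m : smul (tpow k a) f m = if (a <= m)%N then f (m - a)%N else 0.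
Proof.
rewrite /smul /tpow.
rewrite (eq_bigr (fun i : 'I_m.+1 => if nat_of_ord i == a then f (m - a)%N else 0)); last first.
  by move=> i _; case: eqP => [->|_]; rewrite ?mul1r ?mul0r.
rewrite -big_mkcond /= (big_ord1_eq _ (fun _ => f (m - a)%N)) ltnS //.
Qed.

End Basic.

Section Basic2.
Variable k : fieldType.
Implicit Types f g h q x y z : series k.

Definition sconst (c : k) : series k := fun m => if m == 0%N then c else 0.

Lemma smul_const c f m : smul (sconst c) f m = c * f m.
Proof.
rewrite /smul big_ord_recl /= /sconst eqxx subn0 big1 ?addr0 //.
by move=> i _; rewrite /= mul0r.
Qed.

Lemma tpowD a b : smul (tpow k a) (tpow k b) = tpow k (a + b).
Proof.
apply: sext => m; rewrite smul_tpow /tpow.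
case: (leqP a m) => am.
  have -> : (m - a == b)%N = (m == a + b)%N.
    by apply/idP/idP => /eqP e; apply/eqP; move: e am; clear; lia.
  by [].
by have -> : (m == a + b)%N = false by apply/eqP; move: am; clear; lia.
Qed.

Lemma tpow_cancel c f g : smul (tpow k c) f = smul (tpow k c) g -> f = g.
Proof.
move=> e; apply: sext => m; have := congr1 (fun s => s (m + c)%N) e.
by rewrite /= !smul_tpow leq_addl addnK.
Qed.

Lemma smul_low e1 e2 f g : (forall i, (i < e1)%N -> f i = 0) ->
  (forall i, (i < e2)%N -> g i = 0) -> forall m, (m < e1 + e2)%N -> smul f g m = 0.
Proof.
move=> F G m me; apply/eqP; apply: contraT => /smul_nz [i [im fi gi]].
case: (ltnP i e1) => ie1; first by rewrite F ?eqxx in fi.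
by move: gi; rewrite G ?eqxx //; move: im me ie1; clear; lia.
Qed.

Lemma sum_two (N e e' : nat) (F : nat -> k) : (e < N)%N -> (e' < N)%N -> e != e' ->
  (forall p, (p < N)%N -> p != e -> p != e' -> F p = 0) ->
  \sum_(p < N) F p = F e + F e'.
Proof.
move=> eN e'N ee FF.
rewrite (eq_bigr (fun p : 'I_N => (if nat_of_ord p == e then F e else 0) +
                                  (if nat_of_ord p == e' then F e' else 0))); last first.
  move=> p _; case: eqP => [->|pe]; case: eqP => [pe'|pe'].
  - by move: ee; rewrite pe' eqxx.
  - by rewrite addr0.
  - by rewrite add0r pe'.
  - by rewrite addr0 FF //; apply/eqP.
rewrite big_split /= -!big_mkcond /= (big_ord1_eq _ (fun _ => F e)) (big_ord1_eq _ (fun _ => F e')).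
by rewrite eN e'N.
Qed.

Lemma smul_first e q y : (forall p, (p < e)%N -> y p = 0) -> smul q y e = q 0%N * y e.
Proof.
move=> Y; rewrite smulC /smul big_ord_recr /= subnn big1 ?add0r; first by rewrite mulrC.
by move=> i _; rewrite Y ?mul0r.
Qed.

Lemma smul_two e d q y : (0 < d)%N -> (forall p, (p < e)%N -> y p = 0) ->
  (forall p, (e < p)%N -> (p < e + d)%N -> y p = 0) ->
  smul q y (e + d) = q d * y e + q 0%N * y (e + d)%N.
Proof.
move=> d0 Y1 Y2; rewrite smulC /smul (@sum_two (e + d).+1 e (e + d)%N
   (fun p => y p * q (e + d - p)%N)).
- by rewrite subnn addKn [y e * _]mulrC [y (e + d)%N * _]mulrC.
- by move: d0; clear; lia.
- by [].
- by move: d0; clear => d0; apply/eqP; lia.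
move=> p pN pe pe'; case: (ltnP p e) => pe1; first by rewrite Y1 ?mul0r.
by rewrite Y2 ?mul0r //; move: pe pe' pe1 pN; clear; move=> /eqP ? /eqP ? ? ?; lia.
Qed.

End Basic2.

Section Basic3.
Variable k : fieldType.
Lemma smul_linr (q : series k) (al be : k) (f g : series k) :
  smul q (fun m => al * f m + be * g m) = fun m => al * smul q f m + be * smul q g m.
Proof.
apply: sext => m; rewrite /smul !mulr_sumr -big_split; apply: eq_bigr => i _.
by rewrite mulrDr !mulrA (mulrC (q i) al) (mulrC (q i) be).
Qed.

Lemma ex_min (P : nat -> Prop) : (exists m, P m) ->
  exists m, P m /\ forall m', (m' < m)%N -> ~ P m'.
Proof.
move=> [m Pm]; apply: NNPP => N; move: Pm; elim/ltn_ind: m => m IH Pm.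
by apply: N; exists m; split => // m' m'm Pm'; apply: IH m'm Pm'.
Qed.
End Basic3.

Section Div.
Variable k : fieldType.
Variables (z x : series k) (e : nat).

Fixpoint qseq (N : nat) : seq k :=
  match N with
  | 0 => [::]
  | N'.+1 => let s := qseq N' in
      rcons s ((z (N' + e)%N - \sum_(j < N') s`_j * x (N' + e - j)%N) / x e)
  end.

Definition sdiv : series k := fun m => (qseq m.+1)`_m.

Lemma size_qseq N : size (qseq N) = N.
Proof. by elim: N => //= N IH; rewrite size_rcons IH. Qed.

Lemma qseq_nth N m : (m < N)%N -> (qseq N)`_m = sdiv m.
Proof.
elim: N => // N IH; rewrite ltnS leq_eqVlt => /orP [/eqP ->|mN].
  by [].
by rewrite /= nth_rcons size_qseq mN IH.
Qed.

Lemma sdiv_rec m : sdiv m = (z (m + e)%N - \sum_(j < m) sdiv j * x (m + e - j)%N) / x e.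
Proof.
rewrite /sdiv /= nth_rcons size_qseq ltnn eqxx; congr ((_ - _) / _).
by apply: eq_bigr => j _; rewrite qseq_nth.
Qed.

Hypotheses (xlow : forall p, (p < e)%N -> x p = 0) (xe : x e != 0)
  (zlow : forall p, (p < e)%N -> z p = 0).

Lemma sdivP : smul sdiv x = z.
Proof.
apply: sext => m; case: (ltnP m e) => me.
  by rewrite zlow // (@smul_low _ 0 e) // add0n.
have -> : m = (m - e + e)%N by rewrite subnK.
move: (m - e)%N => m'; clear m me.
rewrite /smul.
have -> : (m' + e).+1 = (m'.+1 + e)%N by rewrite addSn.
rewrite big_split_ord /= [X in _ + X]big1 ?addr0; last first.
  move=> i _; rewrite xlow ?mulr0 //; move: (ltn_ord i); clear; lia.
have := sdiv_rec m'; move/(congr1 (fun t => t * x e)); rewrite mulfVK //.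
move=> E; rewrite big_ord_recr /=.
have -> : (m' + e - m')%N = e by clear; lia.
rewrite E addrC subrK; done.
Qed.

Lemma sdiv_supp (P : nat -> Prop) :
  (forall m, z (m + e)%N != 0 -> P m) ->
  (forall m s, P m -> (0 < s)%N -> x (s + e)%N != 0 -> P (m + s)%N) ->
  forall m, sdiv m != 0 -> P m.
Proof.
move=> Pz Ps; elim/ltn_ind => m IH; rewrite sdiv_rec mulf_eq0 negb_or => /andP [nz _].
have [zm|zm] := eqVneq (z (m + e)%N) 0; last by apply: Pz.
move: nz; rewrite zm sub0r oppr_eq0 => nz.
have [j [/= sj xj]] : exists j : 'I_m, sdiv j != 0 /\ x (m + e - j)%N != 0.
  apply: NNPP => N; move/eqP: nz; apply; apply: big1 => j _.
  have [->|sj] := eqVneq (sdiv j) 0; first by rewrite mul0r.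
  have [->|xj] := eqVneq (x (m + e - j)%N) 0; first by rewrite mulr0.
  by exfalso; apply: N; exists j.
have -> : m = (j + (m - j))%N by rewrite subnKC // ltnW.
apply: Ps; first by apply: IH.
  by rewrite subn_gt0.
by have -> : (m - j + e = m + e - j)%N by move: (ltn_ord j); clear; lia.
Qed.

End Div.

Section Ideal.
Variable k : fieldType.
Variable H : pred nat.
Hypothesis H0 : (0 \in H).
Hypothesis Hadd : forall x y, x \in H -> y \in H -> (x + y)%N \in H.
Implicit Types f g h q x y z r s : series k.
Local Notation inR := (@inR k H).


Lemma inR_mul r s : inR r -> inR s -> inR (smul r s).
Proof.
move=> R S m /smul_nz [i [im ri si]].
have -> : m = (i + (m - i))%N by rewrite subnKC.
by apply: Hadd; [apply: R | apply: S].
Qed.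

Lemma inR_add r s : inR r -> inR s -> inR (sadd r s).
Proof.
move=> R S m; rewrite /sadd => nz.
have [r0|] := eqVneq (r m) 0; last by apply: R.
by apply: S; move: nz; rewrite r0 add0r.
Qed.

Lemma inR_const c : inR (sconst c).
Proof. by move=> m; rewrite /sconst; case: (m =P 0%N) => [->|_] //; rewrite eqxx. Qed.

Lemma inR_tpow a : a \in H -> inR (tpow k a).
Proof. by move=> aH m; rewrite /tpow; case: (m =P a) => [->|_] //; rewrite eqxx. Qed.

Lemma inR_zero : inR (szero k).
Proof. by move=> m; rewrite /szero eqxx. Qed.

Lemma inR_lin c f d g : inR f -> inR g -> inR (fun m => c * f m + d * g m).
Proof.
move=> F G m nz.
have [f0|] := eqVneq (f m) 0; last by apply: F.
by apply: G; apply: contraNneq nz => ->; rewrite f0 !mulr0 addr0.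
Qed.

Definition isIdeal (J : sset k) :=
  [/\ J (szero k), forall f g, J f -> J g -> J (sadd f g),
      forall r f, inR r -> J f -> J (smul r f) & forall f, J f -> inR f].

Lemma ideal_lin J c f d g : isIdeal J -> J f -> J g -> J (fun m => c * f m + d * g m).
Proof.
case=> _ Jadd Jmul _ F G.
have -> : (fun m => c * f m + d * g m) = sadd (smul (sconst c) f) (smul (sconst d) g).
  by apply: sext => m; rewrite /sadd !smul_const.
by apply: Jadd; apply: Jmul => //; apply: inR_const.
Qed.

Lemma ideal_ext J f g : (forall m, f m = g m) -> J f -> J g.
Proof. by move=> e; rewrite (sext e). Qed.

Definition homJ (J : sset k) (phi : series k -> series k) :=
  [/\ forall y, J y -> inR (phi y),
      forall y z, J y -> J z -> phi (sadd y z) = sadd (phi y) (phi z) &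
      forall r y, inR r -> J y -> phi (smul r y) = smul r (phi y)].

Definition Tprop (J : sset k) := forall phi, homJ J phi -> forall y, J y -> J (phi y).

Lemma homJ_mul J q : isIdeal J -> (forall y, J y -> inR (smul q y)) -> homJ J (smul q).
Proof.
move=> _ Q; split => //.
  by move=> y z _ _; rewrite smulDr.
by move=> r y _ _; rewrite !smulA (smulC q r).
Qed.

Section Trace.
Variable M : Rmodule k H.

Lemma trace_single (f : mcar M -> series k) (u : mcar M) : is_hom f -> trace M (f u).
Proof.
move=> hf; exists 1%N, (fun _ => f), (fun _ => u); split => //.
by apply: sext => m; rewrite ssumE big_ord1.
Qed.

Lemma hom0 (f : mcar M -> series k) : is_hom f -> f (m0 M) = szero k.
Proof.
case=> _ [hadd _]; apply: sext => m.
have := congr1 (fun s => s m) (hadd (m0 M) (m0 M)); rewrite madd0 /sadd /szero.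
by move/(congr1 (fun t => t - f (m0 M) m)); rewrite subrr addrK => <-.
Qed.

Lemma trace_ideal : isIdeal (trace M).
Proof.
split.
- exists 0%N, (fun _ => fun _ => szero k), (fun _ => m0 M); split.
    by case.
  by apply: sext => m; rewrite ssumE big_ord0.
- move=> f g [n1 [f1 [x1 [h1 ->]]]] [n2 [f2 [x2 [h2 ->]]]].
  exists (n1 + n2)%N, (fun i => match split i with inl i1 => f1 i1 | inr i2 => f2 i2 end),
     (fun i => match split i with inl i1 => x1 i1 | inr i2 => x2 i2 end); split.
    by move=> i; case: split.
  apply: sext => m; rewrite /sadd !ssumE big_split_ord /=.
  congr (_ + _); apply: eq_bigr => i _.
    by have L := unsplitK (inl 'I_n2 i); simpl in L; rewrite L.
  by have L := unsplitK (inr 'I_n1 i); simpl in L; rewrite L.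
- move=> r f R [n1 [f1 [x1 [h1 ->]]]].
  exists n1, f1, (fun i => mact r (x1 i)); split => //.
  apply: sext => m; rewrite ssumE /smul.
  under eq_bigr do rewrite ssumE mulr_sumr.
  rewrite exchange_big /=; apply: eq_bigr => i _.
  by case: (h1 i) => _ [_ ->].
- move=> f [n1 [f1 [x1 [h1 ->]]]] m; rewrite ssumE => nz.
  have [i fi] : exists i, f1 i (x1 i) m != 0.
    apply: NNPP => N; move/eqP: nz; apply; apply: big1 => i _.
    by apply/eqP; apply: contraT => fi; exfalso; apply: N; exists i.
  by case: (h1 i) => hR _; apply: hR fi.
Qed.

Lemma hom_ssum (J : sset k) (phi : series k -> series k) : isIdeal J ->
  (forall y z, J y -> J z -> phi (sadd y z) = sadd (phi y) (phi z)) ->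
  forall n (F : 'I_n -> series k), (forall i, J (F i)) ->
  J (ssum F) /\ phi (ssum F) = ssum (fun i => phi (F i)).
Proof.
case=> J0 Jadd _ _ hadd; elim => [|n IH] F FJ.
  have e : ssum F = szero k by apply: sext => m; rewrite ssumE big_ord0.
  have e' : ssum (fun i => phi (F i)) = szero k by apply: sext => m; rewrite ssumE big_ord0.
  rewrite e e'; split => //.
  apply: sext => m; have := congr1 (fun s => s m) (hadd _ _ J0 J0).
  have -> : sadd (szero k) (szero k) = szero k by apply: sext => p; rewrite /sadd addr0.
  by rewrite /sadd /szero; move/(congr1 (fun t => t - phi (szero k) m)); rewrite subrr addrK => <-.
have e : ssum F = sadd (F ord0) (ssum (fun i => F (lift ord0 i))).
  by rewrite /ssum big_ord_recl.
have e' : ssum (fun i => phi (F i)) = sadd (phi (F ord0)) (ssum (fun i => phi (F (lift ord0 i)))).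
  by rewrite /ssum big_ord_recl.
have [J1 P1] := IH (fun i => F (lift ord0 i)) (fun i => FJ _).
by rewrite e e' hadd // P1; split => //; apply: Jadd.
Qed.

Lemma trace_T : Tprop (trace M).
Proof.
move=> phi [hR hadd hlin] y [n1 [f1 [x1 [h1 ->]]]].
have TI := trace_ideal.
have [_ ->] := hom_ssum TI hadd (fun i => trace_single (x1 i) (h1 i)).
exists n1, (fun i (u : mcar M) => phi (f1 i u)), x1; split => //.
move=> i; have [f1R [f1add f1lin]] := h1 i; split; [|split].
- by move=> u; apply: hR; apply: trace_single.
- by move=> u v; rewrite f1add hadd //; apply: trace_single.
- by move=> r u R; rewrite f1lin // hlin //; apply: trace_single.
Qed.

End Trace.

End Ideal.

Section Mod.
Variable k : fieldType.
Variable H : pred nat.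
Hypothesis H0 : (0 \in H).
Hypothesis Hadd : forall x y, x \in H -> y \in H -> (x + y)%N \in H.
Implicit Types f g h q x y z r s : series k.
Local Notation inR := (@inR k H).

Definition proj r : series k := fun m => if m \in H then r m else 0.
Lemma inR_proj r : inR (proj r).
Proof. by move=> m; rewrite /proj; case: (m \in H) => //; rewrite eqxx. Qed.
Lemma projE r : inR r -> proj r = r.
Proof.
move=> R; apply: sext => m; rewrite /proj; case: ifP => // mH.
by have [->//|/R] := eqVneq (r m) 0; rewrite mH.
Qed.

Variable J : sset k.
Hypothesis JI : isIdeal H J.

Lemma J0 : J (szero k). Proof. by case: JI. Qed.
Lemma Jadd f g : J f -> J g -> J (sadd f g). Proof. by case: JI => _ A _ _; apply: A. Qed.
Lemma Jmul r f : inR r -> J f -> J (smul r f). Proof. by case: JI => _ _ A _; apply: A. Qed.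
Lemma Jsub f : J f -> inR f. Proof. by case: JI => _ _ _ A; apply: A. Qed.

Definition MT := {f : series k | J f}.
Lemma MT_inj (u v : MT) : proj1_sig u = proj1_sig v -> u = v.
Proof.
case: u => f Jf; case: v => g Jg /= e; subst g; f_equal; apply: proof_irrelevance.
Qed.

Definition Mzero : MT := exist _ (szero k) J0.
Definition Madd (u v : MT) : MT := exist _ (sadd (proj1_sig u) (proj1_sig v))
  (Jadd (proj2_sig u) (proj2_sig v)).
Definition Mopp (u : MT) : MT := exist _ (smul (sconst (-1)) (proj1_sig u))
  (Jmul (@inR_const k H H0 (-1)) (proj2_sig u)).
Definition Mact r (u : MT) : MT := exist _ (smul (proj r) (proj1_sig u))
  (Jmul (@inR_proj r) (proj2_sig u)).

Lemma MaddA u v w : Madd u (Madd v w) = Madd (Madd u v) w.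
Proof. by apply: MT_inj; apply: sext => m; rewrite /= /sadd addrA. Qed.
Lemma MaddC u v : Madd u v = Madd v u.
Proof. by apply: MT_inj; apply: sext => m; rewrite /= /sadd addrC. Qed.
Lemma Madd0 u : Madd Mzero u = u.
Proof. by apply: MT_inj; apply: sext => m; rewrite /= /sadd /szero add0r. Qed.
Lemma MaddN u : Madd (Mopp u) u = Mzero.
Proof. by apply: MT_inj; apply: sext => m; rewrite /= /sadd smul_const /szero mulN1r addNr. Qed.
Lemma MactDm r u v : inR r -> Mact r (Madd u v) = Madd (Mact r u) (Mact r v).
Proof. by move=> _; apply: MT_inj; rewrite /= smulDr. Qed.
Lemma MactDr r s u : inR r -> inR s -> Mact (sadd r s) u = Madd (Mact r u) (Mact s u).
Proof. by move=> R S; apply: MT_inj; rewrite /= !projE ?smulDl //; apply: inR_add. Qed.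
Lemma MactM r s u : inR r -> inR s -> Mact (smul r s) u = Mact r (Mact s u).
Proof. by move=> R S; apply: MT_inj; rewrite /= !projE ?smulA //; apply: inR_mul. Qed.
Lemma Mact1 u : Mact (sone k) u = u.
Proof.
apply: MT_inj; rewrite /= projE ?smul1 //.
by move=> m; rewrite /sone; case: (m =P 0%N) => [->|] //; rewrite eqxx.
Qed.

Definition MJ : Rmodule k H := @Build_Rmodule k H MT Mzero Madd Mopp Mact
  MaddA MaddC Madd0 MaddN MactDm MactDr MactM Mact1.

Lemma mk_trace : (forall phi : MT -> series k, @is_hom k H MJ phi -> forall u, J (phi u)) ->
  is_trace_ideal H J.
Proof.
move=> Hh; exists MJ => f; split.
  move=> Jf; exists 1%N, (fun _ (u : MT) => proj1_sig u), (fun _ => exist _ f Jf); split.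
    move=> _; split; [|split].
    - by move=> u; apply: Jsub; apply: (proj2_sig u).
    - by [].
    - by move=> r u R; rewrite /= projE.
  by apply: sext => m; rewrite ssumE big_ord1.
case=> n1 [f1 [x1 [h1 ->]]].
have idh : forall y z, J y -> J z -> id (sadd y z) = sadd (id y) (id z) by [].
by have [] := hom_ssum JI idh (fun i => Hh _ (h1 i) (x1 i)).
Qed.

Variable c : nat.
Hypotheses (Hc : forall m, (c <= m)%N -> m \in H) (Hc1 : (c.-1 \notin H)) (c0 : (0 < c)%N).
Hypothesis JT : forall j, J (tpow k (c + j)).

Lemma hom_rep (phi : MT -> series k) : @is_hom k H MJ phi ->
  exists q, forall u, phi u = smul q (proj1_sig u).
Proof.
case=> hR [hadd hlin].
pose T j : MT := exist _ (tpow k (c + j)) (JT j).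
have tH j : inR (tpow k (c + j)) by apply: inR_tpow; apply: Hc; apply: leq_addr.
have tcH : inR (tpow k c) by rewrite -(addn0 c); apply: tH.
pose g := phi (T 0%N).
have PT j : phi (T j) = smul (tpow k j) g.
  have E : Mact (tpow k c) (T j) = Mact (tpow k (c + j)) (T 0%N).
    by apply: MT_inj; rewrite /= !projE // !tpowD; congr tpow; lia.
  have := congr1 phi E; rewrite /Mact.
  have := hlin (tpow k c) (T j) tcH; rewrite /= => ->.
  have := hlin (tpow k (c + j)) (T 0%N) (tH j); rewrite /= => ->.
  by rewrite -tpowD -smulA; apply: tpow_cancel.
have glow m : (m < c)%N -> g m = 0.
  move=> mc; apply/eqP; apply: contraT => gm.
  have := hR (T (c.-1 - m)%N) c.-1; rewrite PT smul_tpow.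
  have -> : (c.-1 - m <= c.-1)%N by apply: leq_subr.
  have -> : (c.-1 - (c.-1 - m))%N = m by move: mc; clear; lia.
  by move=> /(_ gm) cH; move: Hc1; rewrite cH.
pose q : series k := fun m => g (m + c)%N.
have gq : smul (tpow k c) q = g.
  apply: sext => m; rewrite smul_tpow; case: leqP => cm.
    by rewrite /q subnK.
  by rewrite glow.
exists q => u.
have uR : inR (proj1_sig u) by apply: Jsub; apply: (proj2_sig u).
have E : Mact (proj1_sig u) (T 0%N) = Mact (tpow k c) u.
  by apply: MT_inj; rewrite /= !projE // addn0 smulC.
have := congr1 phi E; rewrite /Mact.
have := hlin (proj1_sig u) (T 0%N) uR; rewrite /= => ->.
have := hlin (tpow k c) u tcH; rewrite /= => ->.
rewrite -/g -gq smulA (smulC (proj1_sig u)) -smulA => /tpow_cancel <-.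
by rewrite smulC.
Qed.

End Mod.


Section Pigeon.
Lemma uniq_seq (T : eqType) : (forall s : seq T, exists x, x \notin s) ->
  forall N, exists s : seq T, uniq s /\ size s = N.
Proof.
move=> inf; elim => [|N [s [us ss]]]; first by exists [::].
have [x xs] := inf s; exists (x :: s); split; first by rewrite /= xs us.
by rewrite /= ss.
Qed.

Lemma pigeon (T : eqType) m (R : T -> 'I_m -> Prop) (s : seq T) : uniq s -> (m < size s)%N ->
  (forall x, x \in s -> exists i, R x i) ->
  exists x y i, [/\ x \in s, y \in s, x != y, R x i & R y i].
Proof.
move=> us ms HR; apply: NNPP => N.
case: m R HR ms N => [|m] R HR ms N.
  by case: s us ms HR N => // x s _ _ /(_ x); rewrite inE eqxx => /(_ isT) [[]].
have : forall x, exists i : 'I_m.+1, x \in s -> R x i.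
  move=> x; case: (boolP (x \in s)) => xs.
    by have [i Ri] := HR x xs; exists i.
  by exists ord0.
move=> /functional_choice [f Hf].
have inj : {in s &, injective f}.
  move=> x y xs ys fxy; apply: NNPP => ne; apply: N; exists x, y, (f x); split => //.
  - by apply/eqP.
  - by apply: Hf.
  - by rewrite fxy; apply: Hf.
have := @uniq_leq_size _ (map f s) (enum 'I_m.+1).
rewrite (map_inj_in_uniq inj) us size_map size_enum_ord => /(_ isT).
have sub : {subset map f s <= enum 'I_m.+1} by move=> i _; rewrite mem_enum.
by move=> /(_ sub); rewrite leqNgt ms.
Qed.
End Pigeon.

Section Semi.
Variable k : fieldType.
Variable H : pred nat.
Variable a : nat -> nat.
Variable n : nat.
Hypothesis HH : numerical_semigroup H.
Hypothesis Ha_incr : forall i j, (i < j)%N -> (a i < a j)%N.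
Hypothesis Ha_enum : forall m, m \in H <-> exists i, a i = m.
Hypothesis Hn : forall i, a (n + i)%N = (a n + i)%N.
Hypothesis Hn_min : forall m, (forall i, a (m + i)%N = (a m + i)%N) -> (n <= m)%N.
Hypothesis Hn3 : (3 <= n)%N.

Lemma H0 : 0 \in H. Proof. by case: HH. Qed.
Lemma Hadd x y : x \in H -> y \in H -> (x + y)%N \in H. Proof. by case: HH => _ [A _]; apply: A. Qed.

Lemma a_lt i j : (a i < a j)%N = (i < j)%N.
Proof.
apply/idP/idP; last by apply: Ha_incr.
by move=> aij; case: (ltnP i j) => // ji; move: aij; rewrite ltnNge leq_eqVlt;
  case: (ji); rewrite leq_eqVlt => /orP [/eqP ->|/Ha_incr ->] //; rewrite ?eqxx ?orbT.
Qed.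

Lemma a_le i j : (a i <= a j)%N = (i <= j)%N.
Proof. by rewrite leqNgt [in RHS]leqNgt a_lt. Qed.

Lemma aH i : a i \in H. Proof. by apply/Ha_enum; exists i. Qed.

Lemma a0 : a 0%N = 0%N.
Proof.
have [i ai] := proj1 (Ha_enum 0%N) H0.
case: i ai => // i ai; have := Ha_incr (ltn0Sn i); rewrite ai ltn0 //.
Qed.

Lemma between m p : m \in H -> (a p <= m)%N -> (m < a p.+1)%N -> m = a p.
Proof.
move=> /Ha_enum [q <-]; rewrite a_le a_lt ltnS => pq qp.
by have -> : q = p by apply/eqP; rewrite eqn_leq pq qp.
Qed.

Lemma geidx m p : m \in H -> (a p <= m)%N -> exists2 q, (p <= q)%N & a q = m.
Proof. by move=> /Ha_enum [q <-]; rewrite a_le => pq; exists q. Qed.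

Local Notation c := (a n).

Lemma Hc m : (c <= m)%N -> m \in H.
Proof. by move=> cm; apply/Ha_enum; exists (n + (m - c))%N; rewrite Hn subnKC. Qed.

Lemma c0 : (0 < c)%N.
Proof. by rewrite -a0 a_lt; apply: leq_trans Hn3. Qed.

Lemma Hc1 : c.-1 \notin H.
Proof.
apply/negP => /Ha_enum [p ap].
have pn : (p < n)%N by rewrite -a_lt ap; move: c0; clear; lia.
have p1 : a p.+1 = c.
  apply/eqP; rewrite eqn_leq a_le pn /=.
  by have := Ha_incr (ltnSn p); rewrite ap; move: c0; clear; lia.
have pn1 : p.+1 = n by apply/eqP; rewrite eqn_leq -(a_le p.+1 n) -(a_le n p.+1) p1 leqnn.
have : (n <= p)%N.
  apply: Hn_min => i; case: i => [|i]; first by rewrite !addn0.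
  rewrite -addSnnS pn1 Hn ap addnS -addSn prednK //; apply: c0.
by rewrite -pn1 ltnn.
Qed.


Local Notation inR := (@inR k H).
Definition I i : sset k := val_ideal (k:=k) H (a i).

Lemma I_ideal i : isIdeal H (I i).
Proof.
split.
- by split; [apply: inR_zero|].
- move=> f g [fR fl] [gR gl]; split; first by apply: inR_add.
  by move=> m mi; rewrite /sadd fl ?gl ?addr0.
- move=> r f R [fR fl]; split; first by apply: inR_mul => //; apply: Hadd.
  by move=> m mi; apply: (@smul_low _ 0 (a i)).
- by move=> f [].
Qed.

Lemma tpow_I i j : (i <= j)%N -> I i (tpow k (a j)).
Proof.
move=> ij; split; first by apply: inR_tpow; apply: aH.
move=> m mi; rewrite /tpow; have -> : (m == a j) = false => //.
by apply/negbTE; move: mi; rewrite -a_le in ij; move: ij; clear; move=> ??; apply/eqP; lia.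
Qed.

Lemma tpowc_I i j : (i <= n)%N -> I i (tpow k (c + j)).
Proof.
move=> i_n; split; first by apply: inR_tpow; apply: Hc; apply: leq_addr.
move=> m mi; rewrite /tpow; have -> : (m == c + j)%N = false => //.
by apply/negbTE; move: mi; rewrite -a_le in i_n; move: i_n; clear; move=> ??; apply/eqP; lia.
Qed.

Lemma Istep p f : I p f -> I p.+1 (fun m => 1 * f m + (- f (a p)) * tpow k (a p) m).
Proof.
case=> fR fl; split.
  by apply: inR_lin => //; apply: inR_tpow; apply: aH.
move=> m mp; rewrite /tpow mul1r; case: (ltngtP m (a p)) => mp'.
- by rewrite fl // mulr0 addr0.
- rewrite mulr0 addr0; apply/eqP; apply: contraT => fm.
  have := between (fR _ fm) (ltnW mp') mp; move: mp'; clear; lia.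
- by rewrite mp' ?eqxx /= ?mulr1 ?addrN.
Qed.

Lemma fill (J : sset k) p : isIdeal H J -> (p <= n)%N ->
  (forall z, (forall m, (m < c)%N -> z m = 0) -> J z) ->
  (forall l, (p <= l)%N -> (l < n)%N -> J (tpow k (a l))) ->
  forall f, I p f -> J f.
Proof.
move=> JI; move Ed : (n - p)%N => d; elim: d p Ed => [|d IH] p Ed pn Jc Jt f If.
  have pe : p = n by move: Ed pn; clear; lia.
  by apply: Jc; case: If => _ fl; rewrite -pe; apply: fl.
have pn' : (p < n)%N by move: Ed; clear; lia.
have Jg := IH p.+1 (ltac:(move: Ed; clear; lia)) pn' Jc
  (fun l pl ln => Jt l (ltnW pl) ln) _ (Istep If).
apply: ideal_ext (ideal_lin H0 1 (f (a p)) JI Jg (Jt p (leqnn p) pn')) => m.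
by rewrite !mul1r mulNr addrNK.
Qed.

Lemma lead (J : sset k) p x : isIdeal H J -> I p x -> x (a p) != 0 ->
  (forall f, I p.+1 f -> J f) -> J x -> J (tpow k (a p)).
Proof.
move=> JI Ix xa JS Jx.
have Jr := JS _ (Istep Ix).
apply: ideal_ext (ideal_lin H0 (x (a p))^-1 (- (x (a p))^-1) JI Jx Jr) => m.
rewrite mul1r; field; exact: xa.
Qed.

Section S3.
Hypothesis P3 : forall i j, (1 <= i)%N -> (i + 2 <= n)%N -> (i + 2 <= j)%N -> (j <= n)%N ->
      (a j + a i.+1 - a i)%N \in H.

Lemma Slem i h h' : (1 <= i)%N -> h \in H -> h' \in H -> (a i <= h)%N ->
  (a (i + 2) <= h')%N -> (h + h' - a i)%N \in H.
Proof.
move Ed : (n - i)%N => d; elim: d i h h' Ed => [|d IH] i h h' Ed i1 hH h'H hi h'i.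
- apply: Hc; have : (a n <= a (i + 2))%N by rewrite a_le; move: Ed; clear; lia.
  move: hi h'i; clear; lia.
case: (leqP (i + 2) n) => i2n; last first.
  apply: Hc; have : (a n <= a (i + 2))%N by rewrite a_le ltnW.
  move: hi h'i; clear; lia.
case: (leqP c h') => h'c.
  by apply: Hc; move: hi h'c; clear; lia.
case: (eqVneq h (a i)) => [->|hne].
  by rewrite addKn.
have [q iq aq] := geidx hH hi.
have hi1 : (a i.+1 <= h)%N.
  rewrite -aq a_le; rewrite leq_eqVlt in iq; case/orP: iq => [/eqP iq|] //.
  by move: hne; rewrite -aq iq eqxx.
have [j ij aj] := geidx h'H h'i.
have jn : (j <= n)%N by rewrite -a_le aj ltnW.
have Hh'' := P3 i1 i2n ij jn.
have ai1 : (a i < a i.+1)%N by apply: Ha_incr.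
have [q' aq'] := proj1 (Ha_enum _) Hh''.
have aj2 : (a (i + 2) <= a j)%N by rewrite a_le.
have q'3 : (a (i.+1 + 2) <= a q')%N.
  have : (a (i + 2) < a q')%N by rewrite aq'; move: aj2 ai1; clear; lia.
  by rewrite a_lt a_le; clear; lia.
have := IH i.+1 h _ (ltac:(move: Ed; clear; lia)) (ltn0Sn _) hH Hh'' hi1.
rewrite aq' in q'3; move=> /(_ q'3).
have -> : (h + (a j + a i.+1 - a i) - a i.+1 = h + h' - a i)%N.
  by rewrite aj; move: ai1 hi h'i; clear; lia.
done.
Qed.


Lemma shift_hom (J : sset k) e : isIdeal H J -> (0 < e)%N -> (c < e)%N ->
  (forall y, J y -> forall m, (m < e)%N -> y m = 0) ->
  homJ H J (fun y m => y m.+1).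
Proof.
move=> JI e0 ce ylow; split.
- move=> y Jy m nz; apply: Hc; case: (ltnP m.+1 e) => me.
    by rewrite ylow ?eqxx in nz.
  by move: me ce; clear; lia.
- by [].
- move=> r y _ Jy; apply: sext => m; rewrite /smul big_ord_recr /=.
  rewrite subnn (ylow y Jy 0%N e0) mulr0 addr0; apply: eq_bigr => j _ /=.
  by rewrite subSn // -ltnS.
Qed.

Lemma classify (J : sset k) : isIdeal H J -> Tprop H J -> (exists f, J f /\ snonzero f) ->
  exists2 i, (i <= n)%N & sset_eq J (I i).
Proof.
move=> JI JT [f0 [Jf0 [m0 fm0]]].
have [e [[x [Jx xe]] emin]] := ex_min (P := fun e => exists x, J x /\ x e != 0)
  (ex_intro _ m0 (ex_intro _ f0 (conj Jf0 fm0))).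
have ylow y : J y -> forall m, (m < e)%N -> y m = 0.
  move=> Jy m me; apply/eqP; apply: contraT => ym; exfalso; apply: (emin m me).
  by exists y.
have Jsub y : J y -> inR y by case: JI => _ _ _ A; apply: A.
have [i ai] := proj1 (Ha_enum e) (Jsub x Jx e xe).
subst e.
have JsubI : forall y, J y -> I i y by move=> y Jy; split; [apply: Jsub|apply: ylow].
have Ix := JsubI x Jx.
have i_n : (i <= n)%N.
  rewrite leqNgt; apply/negP => ni.
  have ce : (c < a i)%N by rewrite a_lt.
  have e0 : (0 < a i)%N by move: ce; clear; lia.
  have := JT _ (shift_hom JI e0 ce ylow) x Jx.
  move=> Jx'; have := ylow _ Jx' (a i).-1; rewrite prednK // => /(_ (ltac:(move: e0; clear; lia))).
  by move/eqP; rewrite (negbTE xe).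
have ac : (a i <= c)%N by rewrite a_le.
have Jc : forall z, (forall m, (m < c)%N -> z m = 0) -> J z.
  move=> z zlow.
  have xl : forall p, (p < a i)%N -> x p = 0 by apply: ylow.
  have zl : forall p, (p < a i)%N -> z p = 0.
    by move=> p pa; apply: zlow; apply: leq_trans pa ac.
  have Q : forall y, J y -> inR (smul (sdiv z x (a i)) y).
    move=> y Jy m /smul_nz [j [jm qj yj]].
    have := sdiv_supp (P := fun j => (c <= j + a i)%N) _ _ qj.
    move=> /(_ _ _) cj; apply: Hc.
    have cj' : (c <= j + a i)%N.
      apply: cj.
        move=> m1 nz; apply/negPn/negP => cm; rewrite zlow ?eqxx in nz => //.
        by rewrite ltnNge.
      by move=> m1 s Pm _ _; apply: leq_trans Pm _; rewrite leq_add2r leq_addr.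
    have : (a i <= m - j)%N.
      by rewrite leqNgt; apply/negP => mj; rewrite ylow ?eqxx in yj.
    by move: cj' jm; clear; lia.
  have := JT _ (homJ_mul JI Q) x Jx.
  by rewrite (sdivP xl xe zl).
have [J0 Jadd Jmul _] := JI.
have xl : forall p, (p < a i)%N -> x p = 0 by apply: ylow.
case: (posnP i) => [i0|ipos].
  subst i; exists 0%N => //; move=> f; split; first by apply: JsubI.
  case=> fR _.
  pose q := sdiv (sone k) x (a 0%N).
  have qR : inR q.
    move=> m; apply: (sdiv_supp (P := fun m0 => m0 \in H)).
      move=> m1; rewrite /sone a0 addn0.
      by case: (m1 =P 0%N) => [-> _|_]; [exact: H0 | rewrite eqxx].
    move=> m1 s Pm _ nz; apply: Hadd => //.
    by have := Jsub x Jx _ nz; rewrite a0 addn0.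
  have J1 : J (sone k).
    have zl : forall p, (p < a 0%N)%N -> sone k p = 0 by rewrite a0.
    by rewrite -(sdivP xl xe zl); apply: Jmul.
  have -> : f = smul f (sone k) by rewrite smulC smul1.
  by apply: Jmul.
case: (eqVneq i n) => [ein|ine].
  exists n => //; move=> f; split; first by rewrite -ein; apply: JsubI.
  by case=> _ fl; apply: Jc; apply: fl.
have i_lt : (i < n)%N by rewrite ltn_neqAle ine i_n.
have JI1 : forall f, I i.+1 f -> J f.
  case: (leqP n i.+1) => [ni1|i2n].
    have ein : i.+1 = n by apply/eqP; rewrite eqn_leq ni1 i_lt.
    by move=> f; rewrite ein; case=> _ fl; apply: Jc; apply: fl.
  have i1 : (1 <= i)%N by [].
  have i2n' : (i + 2 <= n)%N by rewrite addn2.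
  have ai1 : (a i < a i.+1)%N by apply: Ha_incr.
  have StepA : forall l, (i + 2 <= l)%N -> (l <= n)%N -> J (tpow k (a l)).
    move=> l il ln.
    have ail : (a (i + 2) <= a l)%N by rewrite a_le.
    have ai2 : (a i < a (i + 2))%N by rewrite a_lt addn2.
    have zl : forall p, (p < a i)%N -> tpow k (a l) p = 0.
      move=> p pa; rewrite /tpow; case: (p =P a l) => // pe.
      by move: pa ai2 ail; rewrite pe; clear; lia.
    pose q := sdiv (tpow k (a l)) x (a i).
    have Pq : forall j, q j != 0 -> (a (i + 2) <= j + a i)%N /\
        forall h, h \in H -> (a i <= h)%N -> (j + h)%N \in H.
      apply: sdiv_supp.
        move=> j; rewrite /tpow; case: (j + a i =P a l)%N => [je _|_]; last by rewrite eqxx.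
        split; first by rewrite je.
        move=> h hH hi; have -> : (j + h = h + a l - a i)%N by move: je hi; clear; lia.
        by apply: Slem => //; apply: aH.
      move=> j s [P1 P2] s0 xs; split; first by move: P1; clear; lia.
      move=> h hH hi.
      have sH : (s + a i)%N \in H by apply: (Jsub x Jx).
      have := Slem i1 sH (P2 h hH hi) (leq_addl _ _) (ltac:(move: P1 hi; clear; lia)).
      by have -> : (s + a i + (j + h) - a i = j + s + h)%N by clear; lia.
    have Q : forall y, J y -> inR (smul q y).
      move=> y Jy m /smul_nz [j [jm qj yj]].
      have [_ P2] := Pq j qj.
      have := P2 (m - j)%N (Jsub y Jy _ yj).
      have : (a i <= m - j)%N.
        by rewrite leqNgt; apply/negP => mj; rewrite ylow ?eqxx in yj.
      by move=> h /(_ h); rewrite subnKC.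
    have := JT _ (homJ_mul JI Q) x Jx.
    by rewrite (sdivP xl xe zl).
  have JI2 : forall f, I (i + 2) f -> J f.
    apply: fill => // l il ln; apply: StepA => //; exact: ltnW.
  have JI2s : forall f, I i.+2 f -> J f by move=> f; rewrite -addn2; apply: JI2.
  have ai2 : (a i.+1 < a i.+2)%N by rewrite a_lt.
  have Ji1 : J (tpow k (a i.+1)).
    case: (classic (exists y, J y /\ y (a i) = 0 /\ y (a i.+1) != 0)) => [[y [Jy [y0 y1]]]|N].
      apply: (lead JI _ y1 JI2s Jy).
      split; first by apply: Jsub.
      move=> m mi; case: (ltngtP m (a i)) => mi'.
      - by apply: ylow.
      - apply/eqP; apply: contraT => ym.
        have := between (Jsub y Jy _ ym) (ltnW mi') mi; move: mi'; clear; lia.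
      - by rewrite mi'.
    have N' : forall y, J y -> y (a i) = 0 -> y (a i.+1) = 0.
      move=> y Jy y0; apply/eqP; apply: contraT => y1; exfalso; apply: N.
      by exists y.
    have zl : forall p, (p < a i)%N -> tpow k (a i.+1) p = 0.
      move=> p pa; rewrite /tpow; case: (p =P a i.+1) => // pe.
      by move: pa ai1; rewrite pe; clear; lia.
    pose q := sdiv (tpow k (a i.+1)) x (a i).
    have Pq : forall j, q j != 0 -> (a i.+1 <= j + a i)%N /\
        forall h, h \in H -> (a (i + 2) <= h)%N -> (j + h)%N \in H.
      apply: sdiv_supp.
        move=> j; rewrite /tpow; case: (j + a i =P a i.+1)%N => [je _|_]; last by rewrite eqxx.
        split; first by rewrite je.
        move=> h hH hi; have -> : (j + h = a i.+1 + h - a i)%N by move: je hi; clear; lia.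
        by apply: Slem => //; [apply: aH | exact: ltnW].
      move=> j s [P1 P2] s0 xs; split; first by move: P1; clear; lia.
      move=> h hH hi.
      have sH : (s + a i)%N \in H by apply: (Jsub x Jx).
      have := Slem i1 sH (P2 h hH hi) (leq_addl _ _) (ltac:(move: hi; clear; lia)).
      by have -> : (s + a i + (j + h) - a i = j + s + h)%N by clear; lia.
    have Q : forall y, J y -> inR (smul q y).
      move=> y Jy.
      pose al := y (a i) / x (a i).
      pose y' := fun m => 1 * y m + (- al) * x m.
      have Jy' : J y' by apply: (ideal_lin H0).
      have y'0 : y' (a i) = 0 by rewrite /y' /al mulNr mulfVK // mul1r addrN.
      have y'1 := N' _ Jy' y'0.
      have y'R := Jsub _ Jy'.
      have y'low : forall m, (m < a (i + 2))%N -> y' m = 0.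
        rewrite addn2 => m mi; case: (ltngtP m (a i.+1)) => mi'.
        - case: (ltngtP m (a i)) => mi''.
          + by apply: ylow.
          + apply/eqP; apply: contraT => ym.
            have := between (y'R _ ym) (ltnW mi'') mi'; move: mi''; clear; lia.
          + by rewrite mi''.
        - apply/eqP; apply: contraT => ym.
          have := between (y'R _ ym) (ltnW mi') mi; move: mi'; clear; lia.
        - by rewrite mi'.
      have -> : y = fun m => al * x m + 1 * y' m.
        by apply: sext => m; rewrite /y' !mul1r mulNr addrCA addrN addr0.
      rewrite smul_linr; apply: inR_lin.
        by rewrite (sdivP xl xe zl); apply: inR_tpow; apply: aH.
      move=> m /smul_nz [j [jm qj yj]].
      have [_ P2] := Pq j qj.
      have := P2 (m - j)%N (y'R _ yj).
      have : (a (i + 2) <= m - j)%N.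
        by rewrite leqNgt; apply/negP => mj; rewrite y'low ?eqxx in yj.
      by move=> h /(_ h); rewrite subnKC.
    have := JT _ (homJ_mul JI Q) x Jx.
    by rewrite (sdivP xl xe zl).
  apply: fill => // l il ln.
  case: (eqVneq l i.+1) => [->//|lne].
  by apply: StepA => //; [rewrite addn2 ltn_neqAle eq_sym lne il | exact: ltnW].
exists i => // f; split; first by apply: JsubI.
apply: fill => //.
move=> l il ln; case: (eqVneq l i) => [->|lne].
  by apply: (lead JI Ix xe JI1 Jx).
by apply: JI1; apply: tpow_I; rewrite ltn_neqAle eq_sym lne il.
Qed.

End S3.


Lemma JT_I l j : (l <= n)%N -> I l (tpow k (c + j)).
Proof. by move=> ln; apply: tpowc_I. Qed.

Lemma I_trace l : (l <= n)%N -> is_trace_ideal H (I l).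
Proof.
move=> ln.
apply: (@mk_trace k H H0 Hadd _ (I_ideal l)) => phi hphi u.
have [q Hq] := hom_rep Hc Hc1 c0 (fun j => JT_I j ln) hphi.
split; first by case: hphi => R _; apply: R.
rewrite Hq => m ml; apply: (@smul_low _ 0 (a l)) => //.
by case: (proj2_sig u) => _ ul; apply: ul.
Qed.

Lemma I_nonzero l : ideal_nonzero (I l).
Proof.
exists (tpow k (a l)); split; first by apply: tpow_I.
by exists (a l); rewrite /tpow eqxx oner_eq0.
Qed.

Section Fail.
Variables (i j : nat).
Hypotheses (i1 : (1 <= i)%N) (i2n : (i + 2 <= n)%N) (ij : (i + 2 <= j)%N) (jn : (j <= n)%N)
  (fail : (a j + a i.+1 - a i)%N \notin H).

Let d := (a i.+1 - a i)%N.
Lemma ai1 : (a i < a i.+1)%N. Proof. by apply: Ha_incr. Qed.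
Lemma d0 : (0 < d)%N. Proof. by rewrite subn_gt0 ai1. Qed.
Lemma dH : d \notin H.
Proof.
apply/negP => dH; move: fail; have := Hadd (aH j) dH.
by rewrite /d addnBA ?(ltnW ai1) // => ->.
Qed.
Lemma aid : (a i + d)%N = a i.+1. Proof. by rewrite /d subnKC // ltnW // ai1. Qed.

Lemma coef_i q y : I i y -> smul q y (a i) = q 0%N * y (a i).
Proof. by case=> _ yl; apply: smul_first. Qed.

Lemma coef_i1 q y : I i y -> smul q y (a i.+1) = q d * y (a i) + q 0%N * y (a i.+1).
Proof.
case=> yR yl; rewrite -aid; apply: smul_two => //; first exact: d0.
move=> p p1 p2; apply/eqP; apply: contraT => yp.
have := between (yR _ yp) (ltnW p1); rewrite -aid => /(_ p2).
by move: p1; clear; lia.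
Qed.

Variable lam : k.
Definition Jl : sset k := fun f => I i f /\ f (a i.+1) = lam * f (a i).

Lemma Jl_ideal : isIdeal H Jl.
Proof.
have [I0 Iadd Imul Isub] := I_ideal i.
split.
- by split => //; rewrite /szero mulr0.
- move=> f g [If fe] [Ig ge]; split; first by apply: Iadd.
  by rewrite /sadd fe ge mulrDr.
- move=> r f R [If fe]; split; first by apply: Imul.
  rewrite coef_i1 // coef_i // fe.
  have -> : r d = 0 by apply/eqP; apply: contraT => rd; move: dH; rewrite (R _ rd).
  by rewrite mul0r add0r mulrCA.
- by move=> f [If _]; apply: Isub.
Qed.

Lemma ai1c : (a i.+1 < c)%N. Proof. by rewrite a_lt; move: i2n; clear; lia. Qed.

Lemma Jl_trace : is_trace_ideal H Jl.
Proof.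
apply: (@mk_trace k H H0 Hadd _ Jl_ideal) => phi hphi u.
have JTl : forall j', Jl (tpow k (c + j')).
  move=> j'; split; first by apply: JT_I; move: i2n; clear; lia.
  have aic : (a i < c)%N by apply: ltn_trans ai1 ai1c.
  rewrite /tpow; have -> : (a i.+1 == c + j')%N = false.
    by apply/negbTE; move: ai1c; clear; move=> ?; apply/eqP; lia.
  have -> : (a i == c + j')%N = false.
    by apply/negbTE; move: aic; clear; move=> ?; apply/eqP; lia.
  by rewrite mulr0.
have [q Hq] := hom_rep Hc Hc1 c0 JTl hphi.
have Jaj : Jl (tpow k (a j)).
  split; first by apply: tpow_I; move: ij; clear; lia.
  rewrite /tpow; have -> : (a i.+1 == a j) = false.
    by apply/negbTE; rewrite eqn_leq negb_and -!ltnNge !a_lt; move: ij; clear; lia.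
  have -> : (a i == a j) = false.
    by apply/negbTE; rewrite eqn_leq negb_and -!ltnNge !a_lt; move: ij; clear; lia.
  by rewrite mulr0.
have qd : q d = 0.
  case: hphi => R _.
  have := R (exist _ (tpow k (a j)) Jaj) (a j + d)%N.
  rewrite Hq /= smulC smul_tpow leq_addr addKn.
  move=> Hx; apply/eqP; apply: contraT => qd; have := Hx qd.
  by rewrite /d addnBA ?(ltnW ai1) // => hj; move: fail; rewrite hj.
case: (proj2_sig u) => Iu ue.
have Iq : I i (smul q (proj1_sig u)).
  split; first by case: hphi => R _; rewrite -Hq; apply: R.
  by move=> m ml; apply: (@smul_low _ 0 (a i)) => //; case: Iu.
rewrite Hq; split => //.
by rewrite coef_i1 // coef_i // qd mul0r add0r ue mulrCA.
Qed.

Definition wl : series k := fun m => tpow k (a i) m + lam * tpow k (a i.+1) m.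

Lemma ai_ne : (a i == a i.+1) = false.
Proof. by apply/negbTE; rewrite neq_ltn ai1. Qed.

Lemma wl_J : Jl wl.
Proof.
split.
  apply: ideal_ext (ideal_lin H0 1 lam (I_ideal i) (tpow_I (leqnn i)) (tpow_I (leqnSn i))).
  by move=> m; rewrite mul1r.
by rewrite /wl /tpow !eqxx eq_sym ai_ne mulr0 addr0 add0r mulr1.
Qed.

Lemma Jl_nonzero : ideal_nonzero Jl.
Proof.
exists wl; split; first exact: wl_J.
exists (a i); rewrite /wl /tpow eqxx ai_ne mulr0 addr0 oner_eq0 //.
Qed.

Lemma Jl_neq_I l : ~ sset_eq Jl (I l).
Proof.
move=> E; case: (leqP l i) => li.
  have := proj2 (E (tpow k (a i.+1))) (tpow_I (leqW li)).
  by case=> _; rewrite /tpow eqxx ai_ne mulr0 => /eqP; rewrite oner_eq0.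
have := proj1 (E wl) wl_J; case=> _ /(_ (a i)); rewrite a_lt => /(_ li).
by rewrite /wl /tpow eqxx ai_ne mulr0 addr0 => /eqP; rewrite oner_eq0.
Qed.

End Fail.

Lemma Jl_neq i lam mu : lam != mu -> ~ sset_eq (Jl i lam) (Jl i mu).
Proof.
move=> lm E; have [_] := proj1 (E (wl i lam)) (wl_J i lam).
rewrite /wl /tpow !eqxx eq_sym ai_ne mulr0 addr0 add0r mulr1 => e.
by move: lm; rewrite e /= mulr1 eqxx.
Qed.


Lemma P3_P2 (P3 : forall i j, (1 <= i)%N -> (i + 2 <= n)%N -> (i + 2 <= j)%N -> (j <= n)%N ->
      (a j + a i.+1 - a i)%N \in H) i :
  (1 <= i)%N -> (i + 2 <= n)%N ->
  sset_eq (ideal_mul (I i) (I (i + 2)%N)) (sscale (tpow k (a i)) (I (i + 2)%N)).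
Proof.
move=> i1 i2n z; split.
  case=> m [x [y [XY ->]]].
  have zlow : forall p, (p < a i + a (i + 2))%N -> ssum (fun l => smul (x l) (y l)) p = 0.
    move=> p pl; rewrite ssumE big1 // => l _.
    by apply: (smul_low (e1 := a i) (e2 := a (i + 2))) => //; [case: (XY l) => [[_ ?] _]|case: (XY l) => [_ [_ ?]]].
  pose w : series k := fun p => ssum (fun l => smul (x l) (y l)) (p + a i)%N.
  exists w; split; last first.
    apply: sext => p; rewrite smul_tpow; case: leqP => ip.
      by rewrite /w /= subnK.
    by rewrite zlow //; move: ip; clear; lia.
  split; last first.
    move=> p pl; rewrite /w zlow //; move: pl; clear; lia.
  move=> p; rewrite /w ssumE => nz.
  have [l] : exists l, smul (x l) (y l) (p + a i) != 0.
    apply: NNPP => N; move/eqP: nz; apply; apply: big1 => l _.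
    by apply/eqP; apply: contraT => nz; exfalso; apply: N; exists l.
  move=> /smul_nz [q [qp xq yq]].
  case: (XY l) => [[xR xl] [yR yl]].
  have qi : (a i <= q)%N by rewrite leqNgt; apply/negP => qi; rewrite xl ?eqxx in xq.
  have qi2 : (a (i + 2) <= p + a i - q)%N.
    by rewrite leqNgt; apply/negP => qi2; rewrite yl ?eqxx in yq.
  have := Slem P3 i1 (xR _ xq) (yR _ yq) qi qi2.
  by have -> : (q + (p + a i - q) - a i = p)%N by move: qp; clear; lia.
case=> y [Iy ->]; exists 1%N, (fun _ => tpow k (a i)), (fun _ => y); split.
  by move=> _; split => //; apply: tpow_I.
by apply: sext => p; rewrite ssumE big_ord1.
Qed.

Lemma P2_P3 (P2 : forall i, (1 <= i)%N -> (i + 2 <= n)%N ->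
  sset_eq (ideal_mul (I i) (I (i + 2)%N)) (sscale (tpow k (a i)) (I (i + 2)%N))) i j :
  (1 <= i)%N -> (i + 2 <= n)%N -> (i + 2 <= j)%N -> (j <= n)%N ->
      (a j + a i.+1 - a i)%N \in H.
Proof.
move=> i1 i2n ij jn.
have := proj1 (P2 i i1 i2n (smul (tpow k (a i.+1)) (tpow k (a j)))).
case.
  exists 1%N, (fun _ => tpow k (a i.+1)), (fun _ => tpow k (a j)); split.
    by move=> _; split; apply: tpow_I => //; apply: leqnSn.
  by apply: sext => p; rewrite ssumE big_ord1.
move=> x [[xR _] e].
have ai1 : (a i < a i.+1)%N by apply: Ha_incr.
have := congr1 (fun s => s (a i.+1 + a j)%N) e; rewrite tpowD smul_tpow.
rewrite /tpow eqxx (_ : (a i <= a i.+1 + a j)%N); last by move: ai1; clear; lia.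
move=> E; have : x (a i.+1 + a j - a i)%N != 0 by rewrite -E oner_eq0.
by move/xR; rewrite (addnC (a i.+1)).
Qed.


Lemma main_sec :
  let I := fun i => val_ideal (k:=k) H (a i) in
  let P1 :=
    (forall J : sset k, ideal_nonzero J -> is_trace_ideal H J ->
        exists2 i, (i <= n)%N & sset_eq J (I i)) /\
    (forall i, (i <= n)%N -> ideal_nonzero (I i) /\ is_trace_ideal H (I i)) in
  let P2 :=
    forall i, (1 <= i)%N -> (i + 2 <= n)%N ->
      sset_eq (ideal_mul (I i) (I (i + 2)%N)) (sscale (tpow k (a i)) (I (i + 2)%N)) in
  let P3 :=
    forall i j, (1 <= i)%N -> (i + 2 <= n)%N -> (i + 2 <= j)%N -> (j <= n)%N ->
      (a j + a i.+1 - a i)%N \in H in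
  let P4 :=
    exists (m : nat) (L : 'I_m -> sset k),
      forall J : sset k, ideal_nonzero J -> is_trace_ideal H J ->
        exists i, sset_eq J (L i) in
  [/\ P1 <-> P2, P1 <-> P3 &
      ((forall s : seq k, exists x, x \notin s) -> (P1 <-> P4))].
Proof.
move=> I0 P1 P2 P3 P4.
have H31 : P3 -> P1.
  move=> p3; split.
    move=> J [f [Jf fnz]] [M EM].
    have TI : isIdeal H (trace M) by apply: trace_ideal.
    have [i ilen E] := classify p3 TI (@trace_T k H M) (ex_intro _ f (conj (proj1 (EM f) Jf) fnz)).
    by exists i => // g; rewrite EM E.
  by move=> i ilen; split; [apply: I_nonzero | apply: I_trace].
have H13 : P1 -> P3.
  move=> [p1a _] i j i1 i2n ij jn; apply: contraT => fl.
  have [l _ E] := p1a _ (Jl_nonzero i 0) (Jl_trace i2n ij fl 0).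
  by case: (Jl_neq_I E).
have H23 : P2 -> P3 by move=> p2 i j; apply: P2_P3.
have H32 : P3 -> P2 by move=> p3 i; apply: P3_P2.
split.
- by split => [/H13/H32|/H23/H31].
- by split.
move=> kinf; split.
  move=> [p1a _]; exists n.+1, (fun i : 'I_n.+1 => I0 i) => J Jnz JT.
  have [i ilen E] := p1a J Jnz JT.
  by exists (Ordinal (ilen : (i < n.+1)%N)).
move=> [m [L HL]]; apply: H31 => i j i1 i2n ij jn; apply: contraT => fl.
have [s [us ss]] := uniq_seq kinf m.+1.
have HR : forall lam, lam \in s -> exists l, sset_eq (Jl i lam) (L l).
  by move=> lam _; apply: HL; [apply: Jl_nonzero | exact: (Jl_trace i2n ij fl)].
have [x [y [l [xs ys xy Ex Ey]]]] :=
  @pigeon _ m (fun lam l => sset_eq (Jl i lam) (L l)) s us (ltac:(by rewrite ss)) HR.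
case: (@Jl_neq i x y xy) => f; split => Hf; [apply/Ey; apply/Ex | apply/Ex; apply/Ey] => //.
Qed.

End Semi.

Theorem theorem4p1 (k : fieldType) (H : pred nat) (a : nat -> nat) (n : nat)
  (HH : numerical_semigroup H)
  (Ha_incr : forall i j, (i < j)%N -> (a i < a j)%N)
  (Ha_enum : forall m, m \in H <-> exists i, a i = m)
  (Hn : forall i, a (n + i)%N = (a n + i)%N)
  (Hn_min : forall m, (forall i, a (m + i)%N = (a m + i)%N) -> (n <= m)%N)
  (Hn3 : (3 <= n)%N) :
  let I := fun i => val_ideal (k:=k) H (a i) in
  let P1 :=
    (forall J : sset k, ideal_nonzero J -> is_trace_ideal H J ->
        exists2 i, (i <= n)%N & sset_eq J (I i)) /\
    (forall i, (i <= n)%N -> ideal_nonzero (I i) /\ is_trace_ideal H (I i)) in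
  let P2 :=
    forall i, (1 <= i)%N -> (i + 2 <= n)%N ->
      sset_eq (ideal_mul (I i) (I (i + 2)%N)) (sscale (tpow k (a i)) (I (i + 2)%N)) in
  let P3 :=
    forall i j, (1 <= i)%N -> (i + 2 <= n)%N -> (i + 2 <= j)%N -> (j <= n)%N ->
      (a j + a i.+1 - a i)%N \in H in
  let P4 :=
    exists (m : nat) (L : 'I_m -> sset k),
      forall J : sset k, ideal_nonzero J -> is_trace_ideal H J ->
        exists i, sset_eq J (L i) in
  [/\ P1 <-> P2, P1 <-> P3 &
      ((forall s : seq k, exists x, x \notin s) -> (P1 <-> P4))].
Proof.
exact: (@main_sec k H a n HH Ha_incr Ha_enum Hn Hn_min Hn3).
Qed.
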